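(* Let $C$ be an $[n,k]$ code over $\mathbb{F}_q$ with $d(C^\perp)=3$. Then $\gamma(C)=k$ $(=k-d(C^\perp)+3)$ if and only if $C$ is monomially equivalent to a dual Hamming code.
   Context: An $[n,k]$ code over $\mathbb{F}_q$ is a $k$-dimensional subspace $C\subseteq\mathbb{F}_q^n$; write $E=\{1,\dots,n\}$. For $\bm{x}\in\mathbb{F}_q^n$, $\mathrm{supp}(\bm{x})=\{i: x_i\neq 0\}$ and the weight is $|\mathrm{supp}(\bm{x})|$; for $B\subseteq\mathbb{F}_q^n$, $\mathrm{Supp}(B)=\bigcup_{\bm{x}\in B}\mathrm{supp}(\bm{x})$. $C^\perp$ is the dual code with respect to the standard inner product and $d(C^\perp)$ is the minimum weight of a nonzero codeword of $C^\perp$. The covering dimension is $\gamma(C)=\infty$ if $\mathrm{Supp}(C)\neq E$, and otherwise $\gamma(C)$ is the least positive integer $r$ such that $C$ has an $r$-dimensional subspace $D$ with $\mathrm{Supp}(D)=E$. A dual Hamming code is an $[(q^k-1)/(q-1),k]$ code over $\mathbb{F}_q$ with a generator matrix whose columns consist of exactly one nonzero vector from each one-dimensional subspace of $\mathbb{F}_q^k$. Two codes are monomially equivalent if one is obtained from the other by permuting coordinates and multiplying coordinates by nonzero scalars. *)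

(* Defs.v *)
From HB Require Import structures.
From mathcomp Require Import all_boot all_order all_algebra all_fingroup all_field.
Set Implicit Arguments. Unset Strict Implicit. Unset Printing Implicit Defensive.
Import GRing.Theory.
Local Open Scope ring_scope.

Section Codes.
Variables (F : finFieldType) (n : nat).

Definition supp (x : 'rV[F]_n) : {set 'I_n} := [set i | x 0 i != 0].

Definition wt (x : 'rV[F]_n) : nat := #|supp x|.

Definition Supp (B : {vspace 'rV[F]_n}) : {set 'I_n} :=
  [set i | [exists x : 'rV[F]_n, (x \in B) && (x 0 i != 0)]].

Definition in_dual (C : {vspace 'rV[F]_n}) (x : 'rV[F]_n) : Prop :=
  forall y : 'rV[F]_n, y \in C -> x *m y^T = 0.

Definition dual_min_dist (C : {vspace 'rV[F]_n}) (d : nat) : Prop :=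
  (exists x, [/\ in_dual C x, x != 0 & wt x = d]) /\
  (forall x, in_dual C x -> x != 0 -> (d <= wt x)%N).

(* gamma(C) = r  (r a natural number, i.e. gamma(C) finite):
   Supp C = E and r is the least positive integer such that C has an
   r-dimensional subspace D with Supp D = E. *)
Definition covering_dim (C : {vspace 'rV[F]_n}) (r : nat) : Prop :=
  [/\ Supp C = [set: 'I_n],
      (0 < r)%N,
      (exists D : {vspace 'rV[F]_n},
          [/\ (D <= C)%VS, \dim D = r & Supp D = [set: 'I_n]]) &
      (forall r' : nat, (0 < r')%N ->
         (exists D : {vspace 'rV[F]_n},
            [/\ (D <= C)%VS, \dim D = r' & Supp D = [set: 'I_n]]) ->
         (r <= r')%N)].

Definition monomial_map (s : 'S_n) (a : 'I_n -> F) (x : 'rV[F]_n) : 'rV[F]_n :=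
  \row_i (a i * x 0 (s i)).

Definition mon_equiv (C1 C2 : {vspace 'rV[F]_n}) : Prop :=
  exists (s : 'S_n) (a : 'I_n -> F),
    (forall i, a i != 0) /\
    (forall x : 'rV[F]_n, (x \in C2) = (monomial_map s a x \in C1)).

Definition dual_hamming (k : nat) (D : {vspace 'rV[F]_n}) : Prop :=
  n = ((#|F| ^ k - 1) %/ (#|F| - 1))%N /\
  \dim D = k /\
  exists G : 'M[F]_(k, n),
    [/\ D = (\sum_(i < k) <[row i G]>)%VS,
        (forall j, col j G != 0),
        (forall j1 j2, j1 != j2 -> (<[col j1 G]> != <[col j2 G]>)%VS) &
        (forall v : 'cV[F]_k, v != 0 -> exists j, (<[col j G]> = <[v]>)%VS)].

End Codes.

(* Main.v *)
Require Import Defs.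
From HB Require Import structures.
From mathcomp Require Import all_boot all_order all_algebra all_fingroup all_field.
Set Implicit Arguments. Unset Strict Implicit. Unset Printing Implicit Defensive.
Import GRing.Theory.
Local Open Scope ring_scope.

Section Aux.
Variable F : finFieldType.

Lemma line_eq (vT : vectType F) (a b : vT) : a \in <[b]>%VS -> a != 0 -> <[a]>%VS = <[b]>%VS.
Proof.
move=> /vlineP [c ->] nz; have cn0 : c != 0 by apply: contraNneq nz => ->; rewrite scale0r.
apply/eqP; rewrite eqEsubv -!memvE memvZ ?memv_line //=.
have {1}-> : b = c^-1 *: (c *: b) by rewrite scalerA mulVf ?scale1r.
by rewrite memvZ ?memv_line.
Qed.

Lemma line_scale (vT : vectType F) (c : F) (b : vT) : c != 0 -> <[c *: b]>%VS = <[b]>%VS.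
Proof.
move=> cn0; have [->|bn0] := eqVneq b 0; first by rewrite scaler0.
by apply: line_eq; rewrite ?memvZ ?memv_line // scaler_eq0 negb_or cn0.
Qed.

Lemma annih (m k : nat) (M : 'M[F]_(m, k)) : (m < k)%N ->
  exists v : 'cV[F]_k, v != 0 /\ M *m v = 0.
Proof.
move=> mk.
pose f : 'Hom('cV[F]_k, 'cV[F]_m) := linfun (mulmx M).
have := limg_ker_dim f fullv.
have dk : \dim (fullv : {vspace 'cV[F]_k}) = k by by rewrite dimvf /= dim_matrix mulr1.
rewrite capfv dk.
have le1 : (\dim (f @: fullv) <= m)%N.
  have := dimvS (subvf (f @: fullv)); by rewrite dimvf /= dim_matrix mulr1.
move=> E.
have : lker f != 0%VS.
  rewrite -dimv_eq0; apply: contraTN mk => /eqP e0.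
  by rewrite -leqNgt -E e0 add0n.
rewrite -vpick0 => nz; exists (vpick (lker f)); split=> //.
by have := memv_pick (lker f); rewrite memv_ker lfunE /= => /eqP.
Qed.


Lemma span_mul (k n : nat) (G : 'M[F]_(k, n)) (y : 'rV[F]_n) :
  y \in <<[tuple row i G | i < k]>>%VS ->
  y = (\row_i coord [tuple row i G | i < k] i y) *m G.
Proof.
move/coord_span => {1}->; rewrite mulmx_sum_row; apply: eq_bigr => i _.
by rewrite mxE -(tnth_nth 0) tnth_mktuple.
Qed.

Lemma entry_col (k n : nat) (u : 'rV[F]_k) (G : 'M[F]_(k, n)) j :
  (u *m G) 0 j = (u *m col j G) 0 0.
Proof. by rewrite !mxE; apply: eq_bigr => i _; rewrite mxE. Qed.

Lemma separ (k : nat) (a b : 'cV[F]_k) : b != 0 -> a \notin <[b]>%VS ->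
  exists u : 'rV[F]_k, u *m b = 0 /\ u *m a != 0.
Proof.
move=> bn0 anb.
have [i bi] : exists i, b i 0 != 0.
  case: (pickP (fun i => b i 0 != 0)) => [i bi|h]; first by exists i.
  case/negP: bn0; apply/eqP/matrixP => i y; rewrite ord1 mxE.
  by move/negbFE/eqP: (h i).
case: (pickP (fun l => a l 0 * b i 0 - a i 0 * b l 0 != 0)) => [l hl | h].
  exists (b i 0 *: delta_mx 0 l - b l 0 *: delta_mx 0 i); split.
    rewrite mulmxBl -!scalemxAl -!rowE.
    by apply/matrixP => x y; rewrite !ord1 !mxE mulrC subrr.
  apply/negP => /eqP/matrixP/(_ 0 0); rewrite mulmxBl -!scalemxAl -!rowE !mxE => e.
  by case/negP: hl; rewrite [a l 0 * _]mulrC [a i 0 * _]mulrC e.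
case/negP: anb; apply/vlineP; exists (a i 0 / b i 0).
apply/matrixP => l y; rewrite ord1 !mxE; apply: (mulIf bi).
move/negbFE: (h l); rewrite subr_eq0 => /eqP ->.
by rewrite mulrAC divfK.
Qed.

Lemma Lback (n k : nat) (C : {vspace 'rV[F]_n}) (G : 'M[F]_(k, n)) :
  (0 < n)%N ->
  (forall i, row i G \in C) ->
  (forall x, x \in C -> exists u, x = u *m G) ->
  (forall j, col j G != 0) ->
  (forall v : 'cV[F]_k, v != 0 -> exists j, <[col j G]>%VS = <[v]>%VS) ->
  covering_dim C (\dim C).
Proof.
move=> n0 Hr Hu Hc Hl.
set X := [tuple row i G | i < k].
have CX : forall x, x \in C -> x \in <<X>>%VS.
  move=> x /Hu [u ->]; rewrite mulmx_sum_row; apply: memv_suml => i _.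
  apply: memvZ; apply: memv_span.
  by rewrite -(tnth_mktuple (fun i => row i G)) mem_tnth.
have SuppC : Supp C = [set: 'I_n].
  apply/setP => j; rewrite !inE; have := Hc j.
  case: (pickP (fun i => G i j != 0)) => [i gi _| h].
    by apply/existsP; exists (row i G); rewrite Hr mxE gi.
  move=> /negP[]; apply/eqP/matrixP => i y; rewrite ord1 !mxE.
  by move/negbFE/eqP: (h i).
pose j0 : 'I_n := Ordinal n0.
have dC : (0 < \dim C)%N.
  have : j0 \in Supp C by rewrite SuppC inE.
  rewrite inE => /existsP [x /andP [xC xj]].
  have xn0 : x != 0 by apply: contraNneq xj => ->; rewrite mxE.
  have sx : (<[x]> <= C)%VS by rewrite -memvE.
  by have := dimvS sx; rewrite dim_vline xn0.
split => //.
  by exists C; split => //; exact: subvv.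
move=> r' r0 [D [DC dD SD]]; rewrite leqNgt; apply/negP => lt.
have dCk : (\dim C <= k)%N.
  have sX : (C <= <<X>>)%VS by apply/subvP => x; exact: CX.
  by rewrite (leq_trans (dimvS sX)) // (leq_trans (dim_span X)) // size_tuple.
set Y := vbasis D.
pose M : 'M[F]_(\dim D, k) := \matrix_(l, i) coord X i (tnth Y l).
have dk : (\dim D < k)%N by rewrite dD (leq_trans lt dCk).
have [v [vn0 Mv]] := annih M dk.
have [j ej] := Hl v vn0.
have : col j G \in <[v]>%VS by rewrite memvE ej subvv.
move=> /vlineP [c cj].
have Y0 : forall l, (tnth Y l) 0 j = 0.
  move=> l; have Yl : tnth Y l \in C := subvP DC _ (vbasis_mem (mem_tnth l Y)).
  rewrite (span_mul (CX _ Yl)) entry_col cj -scalemxAr mxE.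
  have : row l (M *m v) = 0 by rewrite Mv row0.
  have -> : row l (M *m v) = (\row_i coord X i (tnth Y l)) *m v.
    by rewrite row_mul; congr (_ *m _); apply/rowP => i; rewrite !mxE.
  by move=> ->; rewrite mxE mulr0.
have : j \in Supp D by rewrite SD inE.
rewrite inE => /existsP [x /andP [xD]]; rewrite (coord_vbasis xD) summxE big1 ?eqxx //.
by move=> l _; rewrite mxE -/Y -(tnth_nth 0) Y0 mulr0.
Qed.

Lemma count_cols (k n : nat) (G : 'M[F]_(k, n)) :
  (forall j, col j G != 0) ->
  (forall j1 j2, j1 != j2 -> (<[col j1 G]> != <[col j2 G]>)%VS) ->
  (forall v : 'cV[F]_k, v != 0 -> exists j, <[col j G]>%VS = <[v]>%VS) ->
  n = ((#|F| ^ k - 1) %/ (#|F| - 1))%N.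
Proof.
move=> Hc Hd Hl.
pose A := setX [set: 'I_n] [set c : F | c != 0].
pose f := fun p : 'I_n * F => p.2 *: col p.1 G.
have inj : {in A &, injective f}.
  move=> [i1 c1] [i2 c2]; rewrite !in_setX !inE /= => c1n c2n e.
  have ei : i1 = i2.
    case: (eqVneq i1 i2) => [//|ne]; have := Hd _ _ ne.
    by rewrite -(line_scale (col i1 G) c1n) /f /= in e *; rewrite e line_scale // eqxx.
  subst i2; congr (_, _); apply/eqP.
  have : (c1 - c2) *: col i1 G == 0 by rewrite scalerBl /f /= in e *; rewrite e subrr.
  by rewrite scaler_eq0 (negbTE (Hc i1)) orbF subr_eq0.
have img : [set f x | x in A] = [set~ 0].
  apply/setP => v; rewrite !inE; apply/imsetP/idP.
    case=> [[i c]]; rewrite in_setX !inE /= => c0 ->.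
    by rewrite /f /= scaler_eq0 negb_or c0 Hc.
  move=> vn0; have [j ej] := Hl v vn0.
  have : v \in <[col j G]>%VS by rewrite ej memv_line.
  case/vlineP => c vc; exists (j, c) => //.
  rewrite in_setX !inE /=; apply: contraNneq vn0 => c0.
  by rewrite vc c0 scale0r.
have := card_in_imset inj; rewrite img cardsC1 cardsX cardsT card_ord card_mx muln1.
have cF : #|[set c : F | c != 0]| = (#|F|).-1.
  have -> : [set c : F | c != 0] = [set~ 0] by apply/setP => c; rewrite !inE.
  by rewrite cardsC1.
rewrite cF -!subn1 => e.
by rewrite e mulnK // subn_gt0 card_finNzRing_gt1.
Qed.

Lemma rowsp_in (k n : nat) (G : 'M[F]_(k, n)) (u : 'rV[F]_k) :
  u *m G \in <<[tuple row i G | i < k]>>%VS.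
Proof.
rewrite mulmx_sum_row; apply: memv_suml => i _.
apply: memvZ; apply: memv_span.
by rewrite -(tnth_mktuple (fun i => row i G)) mem_tnth.
Qed.

Lemma mx11_nz (m : 'M[F]_1) : m != 0 -> m 0 0 != 0.
Proof.
apply: contra => /eqP e; apply/eqP/matrixP => a b; by rewrite !ord1 e mxE.
Qed.

Lemma Lfwd (n k : nat) (C : {vspace 'rV[F]_n}) (G : 'M[F]_(k, n)) :
  basis_of C [tuple row i G | i < k] -> dual_min_dist C 3 -> covering_dim C k ->
  [/\ forall j, col j G != 0,
      forall j1 j2, j1 != j2 -> (<[col j1 G]> != <[col j2 G]>)%VS
    & forall v : 'cV[F]_k, v != 0 -> exists j, <[col j G]>%VS = <[v]>%VS].
Proof.
set X := [tuple row i G | i < k].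
case/andP => /eqP spanX freeX [[x3 [_ _ wx3]] dmin] [SuppC k0 _ kmin].
have ent : forall y, y \in C -> forall j, y 0 j = ((\row_i coord X i y) *m col j G) 0 0.
  by move=> y; rewrite -spanX => /span_mul {1}-> j; rewrite entry_col.
have Hc : forall j, col j G != 0.
  move=> j; have : j \in Supp C by rewrite SuppC inE.
  rewrite inE => /existsP [x /andP [xC]]; apply: contraNneq => g0.
  by rewrite (ent _ xC) g0 mulmx0 mxE.
split => //.
  move=> j1 j2 ne; apply/negP => /eqP e.
  have : col j1 G \in <[col j2 G]>%VS by rewrite memvE e subvv.
  case/vlineP => c ec.
  pose w : 'rV[F]_n := delta_mx 0 j1 - c *: delta_mx 0 j2.
  have sc : forall (u : 'rV[F]_k) (g : 'cV[F]_k), (u *m (c *: g)) 0 0 = c * (u *m g) 0 0.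
    by move=> u g; rewrite -scalemxAr mxE.
  have wd : in_dual C w.
    move=> y yC; rewrite mulmxBl -scalemxAl -!rowE.
    apply/matrixP => a b; rewrite !ord1 !mxE (ent _ yC j1) (ent _ yC j2) ec sc.
    by rewrite subrr.
  have wn0 : w != 0.
    apply/negP => /eqP/matrixP/(_ 0 j1); rewrite !mxE !eqxx (negbTE ne) /= mulr0 subr0.
    by move/eqP; rewrite oner_eq0.
  have h1 := dmin w wd wn0.
  have h2 : (wt w <= 2)%N.
    rewrite /wt (leq_trans (subset_leq_card (_ : supp w \subset [set j1; j2]))) ?cards2 ?ne //.
    apply/subsetP => i; rewrite !inE.
    case: (eqVneq i j1) => [//|a]; case: (eqVneq i j2) => [//|b].
    by rewrite !mxE (negbTE a) (negbTE b) /= mulr0 subr0 eqxx.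
  by have := leq_trans h1 h2.
move=> v vn0.
case: (pickP (fun j => <[col j G]>%VS == <[v]>%VS)) => [j /eqP e|h]; first by exists j.
exfalso.
have notin : forall j, col j G \notin <[v]>%VS.
  move=> j; apply/negP => gi; have := h j; by rewrite (line_eq gi (Hc j)) eqxx.
have n0 : (0 < n)%N.
  have h3 : (wt x3 <= n)%N by rewrite /wt -[X in (_ <= X)%N]card_ord max_card.
  by rewrite wx3 in h3; exact: (leq_trans _ h3).
pose j0 : 'I_n := Ordinal n0.
pose phi : 'Hom('rV[F]_k, 'M[F]_1) := linfun (mulmxr v).
pose U := lker phi.
have memU : forall u, (u \in U) = (u *m v == 0) by move=> u; rewrite memv_ker lfunE.
have dimg : \dim (phi @: fullv) = 1%N.
  apply/eqP; rewrite eqn_leq; apply/andP; split.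
    by have := dimvS (subvf (phi @: fullv)); rewrite dimvf /= dim_matrix.
  have [i vi] : exists i, v i 0 != 0.
    case: (pickP (fun i => v i 0 != 0)) => [i bi|h0]; first by exists i.
    case/negP: vn0; apply/eqP/matrixP => i y; rewrite ord1 mxE.
    by move/negbFE/eqP: (h0 i).
  have pin : phi (delta_mx 0 i) \in (phi @: fullv)%VS by rewrite memv_img ?memvf.
  have pn0 : phi (delta_mx 0 i) != 0.
    rewrite lfunE /= -rowE; apply/negP => /eqP/matrixP/(_ 0 0); rewrite !mxE => e.
    by rewrite e eqxx in vi.
  have sp : (<[phi (delta_mx ord0 i)]> <= phi @: fullv)%VS by rewrite -memvE.
  by have := dimvS sp; rewrite dim_vline pn0.
have dU : (\dim U).+1 = k.
  have := limg_ker_dim phi fullv; rewrite capfv dimg addn1 => ->.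
  by rewrite dimvf /= dim_matrix mul1r.
pose psi : 'Hom('rV[F]_k, 'rV[F]_n) := linfun (mulmxr G).
have ker0 : lker psi = 0%VS.
  apply/vspaceP => u; rewrite memv0 memv_ker lfunE /=.
  apply/idP/idP => [/eqP e| /eqP ->]; last by rewrite mul0mx.
  have hz := (freeP freeX) (fun i => u 0 i).
  apply/eqP/rowP => i; rewrite hz ?mxE //.
  rewrite -[RHS]e mulmx_sum_row; apply: eq_bigr => i' _.
  by rewrite -(tnth_nth 0) tnth_mktuple.
set D := (psi @: U)%VS.
have dD : \dim D = \dim U by apply: limg_dim_eq; rewrite ker0 capv0.
have DC : (D <= C)%VS.
  by apply/subvP => y /memv_imgP [u _ ->]; rewrite lfunE /= -spanX rowsp_in.
have SD : Supp D = [set: 'I_n].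
  apply/setP => j; rewrite !inE; have [u [uv ug]] := separ vn0 (notin j).
  apply/existsP; exists (psi u); rewrite memv_img ?memU ?uv ?eqxx //=.
  by rewrite lfunE /= entry_col mx11_nz.
case: (posnP (\dim U)) => [d0|dpos].
  have [u [uv ug]] := separ vn0 (notin j0).
  have un0 : u != 0 by apply: contraNneq ug => ->; rewrite mul0mx.
  have su : (<[u]> <= U)%VS by rewrite -memvE memU uv.
  by have := dimvS su; rewrite dim_vline un0 d0.
have := kmin _ dpos (ex_intro _ D (And3 DC dD SD)).
move=> hk; have : ((\dim U).+1 <= \dim U)%N by rewrite dU.
by rewrite ltnn.
Qed.

Lemma sum_span (k n : nat) (G : 'M[F]_(k, n)) :
  (\sum_(i < k) <[row i G]>)%VS = <<[tuple row i G | i < k]>>%VS.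
Proof.
rewrite span_def big_tuple; apply: eq_bigr => i _; by rewrite tnth_mktuple.
Qed.

Lemma n_pos (n : nat) (C : {vspace 'rV[F]_n}) : dual_min_dist C 3 -> (0 < n)%N.
Proof.
case=> [[x3 [_ _ wx3]] _].
have h3 : (wt x3 <= n)%N by rewrite /wt -[X in (_ <= X)%N]card_ord max_card.
by rewrite wx3 in h3; exact: (leq_trans _ h3).
Qed.

End Aux.

Theorem mainTheorem4 (F : finFieldType) (n : nat) (C : {vspace 'rV[F]_n}) :
  dual_min_dist C 3 ->
  (covering_dim C (\dim C) <->
   exists (k' : nat) (D : {vspace 'rV[F]_n}), dual_hamming k' D /\ mon_equiv C D).
Proof.
move=> hd; have n0 := n_pos hd; split.
  move=> hc.
  set X := vbasis C.
  pose G : 'M[F]_(\dim C, n) := \matrix_(i, j) (tnth X i) 0 j.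
  have eX : [tuple row i G | i < \dim C] = X.
    by apply: eq_from_tnth => i; rewrite tnth_mktuple; apply/rowP => j; rewrite !mxE.
  have hb : basis_of C [tuple row i G | i < \dim C] by rewrite eX vbasisP.
  have [Hc Hd Hl] := Lfwd hb hd hc.
  exists (\dim C), C; split.
    split; first exact: count_cols Hc Hd Hl.
    split => //; exists G; split => //.
    by rewrite sum_span; case/andP: hb => /eqP -> _.
  exists 1%g, (fun _ => 1); split => [i|x]; first exact: oner_neq0.
  congr (_ \in C); apply/rowP => i; by rewrite mxE perm1 mul1r.
case=> k' [D [[_ [_ [G [hD hc hdist hl]]]] [s [a [an hm]]]]].
pose G' : 'M[F]_(k', n) := \matrix_(i, j) (a j * G i (s j)).
have mG : forall u : 'rV[F]_k', monomial_map s a (u *m G) = u *m G'.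
  move=> u; apply/rowP => j; rewrite !mxE big_distrr; apply: eq_bigr => i _.
  by rewrite mxE mulrCA.
have cG : forall j, col j G' = a j *: col (s j) G.
  by move=> j; apply/colP => i; rewrite !mxE.
apply: (Lback (G := G')) => //.
- move=> i; have : row i G \in D.
    by rewrite hD; apply: (subvP (sumv_sup i _ (subvv _))) => //; apply: memv_line.
  rewrite hm; congr (_ \in C); apply/rowP => j; by rewrite !mxE.
- move=> x xC.
  pose y := \row_j (x 0 (s^-1%g j) / a (s^-1%g j)).
  have my : monomial_map s a y = x.
    apply/rowP => i; rewrite !mxE permK mulrC divfK //.
  have : y \in D by rewrite hm my.
  rewrite hD sum_span => /span_mul ey.
  by exists (\row_i coord [tuple row i G | i < k'] i y); rewrite -mG -ey my.
- by move=> j; rewrite cG scaler_eq0 negb_or an hc.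
move=> v vn0; have [j0 e] := hl v vn0.
by exists (s^-1%g j0); rewrite cG line_scale // permKV.
Qed.
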